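(* There is an absolute constant $C_0$ such that the following holds for every integer $m\ge2$. Let $T$ be the balanced binary tree with $m$ leaves, and suppose that at least a $1/4$ fraction of the nodes of $T$ are marked. If $u$ is chosen uniformly at random among the marked nodes of $T$, then the expected number of nodes in the subtree of $T$ rooted at $u$ is at most $C_0\log m$.
   Context: The balanced binary tree with $m$ leaves is defined as follows: if $m=2^k$, it is the complete binary tree with $2^k$ leaves (all at depth $k$); if $2^k<m<2^{k+1}$, take the complete binary tree with $2^k$ leaves and add a pair of children to each of its $m-2^k$ leftmost leaves. It has $m$ leaves and $m-1$ internal nodes; ''nodes'' means all nodes (internal and leaves). *)

(* Defs.v *)
From Stdlib Require Import Reals.
From mathcomp Require Import all_boot.
Set Implicit Arguments. Unset Strict Implicit. Unset Printing Implicit Defensive.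

Inductive btree := Leaf | Node of btree & btree.

Fixpoint complete (k : nat) : btree :=
  if k is k'.+1 then Node (complete k') (complete k') else Leaf.

(* [grow j t] adds a pair of children to each of the (at most) j leftmost
   leaves of t; returns the new tree and the number of unused additions. *)
Fixpoint grow (j : nat) (t : btree) : btree * nat :=
  match t with
  | Leaf => if j is j'.+1 then (Node Leaf Leaf, j') else (Leaf, 0)
  | Node l r =>
      let: (l', j1) := grow j l in
      let: (r', j2) := grow j1 r in
      (Node l' r', j2)
  end.

(* Balanced binary tree with m leaves (m >= 1): with k = floor(log2 m),
   the complete tree with 2^k leaves with its m - 2^k leftmost leaves split. *)
Definition balanced (m : nat) : btree :=
  let k := trunc_log 2 m in (grow (m - 2 ^ k) (complete k)).1.

Fixpoint nleaves (t : btree) : nat :=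
  if t is Node l r then nleaves l + nleaves r else 1.

Fixpoint nnodes (t : btree) : nat :=
  if t is Node l r then (nnodes l + nnodes r).+1 else 1.

(* The list of all nodes of t in preorder, each node represented by the
   number of nodes of the subtree rooted at it. Node i of t (i < nnodes t)
   is the i-th node in preorder. *)
Fixpoint subsizes (t : btree) : seq nat :=
  if t is Node l r then nnodes t :: (subsizes l ++ subsizes r) else [:: 1].

Lemma size_subsizes t : size (subsizes t) = nnodes t.
Proof. by elim: t => //= l IHl r IHr; rewrite size_cat IHl IHr. Qed.

Definition subtree_size (t : btree) (i : 'I_(nnodes t)) : nat :=
  nth 0 (subsizes t) i.

(* Main.v *)
Require Import Defs.
From Stdlib Require Import Reals Lra.
From mathcomp Require Import all_boot zify.

Fixpoint height (t : btree) : nat :=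
  if t is Node l r then (maxn (height l) (height r)).+1 else 0.

Lemma sum_subsizes t : sumn (subsizes t) <= nnodes t * (height t).+1.
Proof.
elim: t => //= l IHl r IHr.
rewrite sumn_cat.
have hl : height l <= maxn (height l) (height r) by apply: leq_maxl.
have hr : height r <= maxn (height l) (height r) by apply: leq_maxr.
set h := maxn _ _ in hl hr *.
have := leq_mul (leqnn (nnodes l)) (hl : (height l).+1 <= h.+1).
have := leq_mul (leqnn (nnodes r)) (hr : (height r).+1 <= h.+1).
move: IHl IHr => *. lia.
Qed.

Lemma height_grow j t : height (grow j t).1 <= (height t).+1.
Proof.
elim: t j => [|l IHl r IHr] j /=; first by case: j.
case E1: (grow j l) => [l' j1]. case E2: (grow j1 r) => [r' j2] /=.
have := IHl j; rewrite E1 /= => H1.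
have := IHr j1; rewrite E2 /= => H2.
rewrite ltnS geq_max; apply/andP; split.
  by apply: leq_trans H1 _; rewrite ltnS leq_maxl.
by apply: leq_trans H2 _; rewrite ltnS leq_maxr.
Qed.

Lemma height_complete k : height (complete k) = k.
Proof. by elim: k => //= k ->; rewrite maxnn. Qed.

Lemma sum_all t : \sum_(i : 'I_(nnodes t)) subtree_size i = sumn (subsizes t).
Proof.
rewrite sumnE (big_nth 0) /= size_subsizes big_mkord.
by apply: eq_bigr.
Qed.

Theorem lemma24 :
  exists C0 : R,
    forall (m : nat), (2 <= m)%N ->
    forall marked : {set 'I_(nnodes (balanced m))},
      (nnodes (balanced m) <= 4 * #|marked|)%N ->
      Rle (Rdiv (INR (\sum_(u in marked) subtree_size u)) (INR #|marked|))
          (Rmult C0 (ln (INR m))).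
Proof.
exists (IZR 24) => m m2 marked Hmk.
set t := balanced m in marked Hmk *.
set S := \sum_(u in marked) subtree_size u.
set M := #|marked|.
set k := trunc_log 2 m.
have Hht : height t <= k.+1.
  by rewrite /t /balanced -/k; apply: leq_trans (height_grow _ _) _;
     rewrite height_complete.
have HS : S <= sumn (subsizes t).
  rewrite -sum_all /S big_mkcond /=; apply: leq_sum => i _; by case: (i \in marked).
have Hn : 0 < nnodes t by case: (t).
have HSn : S <= 4 * M * (k.+2).
  apply: leq_trans HS _; apply: leq_trans (sum_subsizes t) _.
  by apply: leq_mul.
have HM : 0 < M by rewrite -(ltn_pmul2l (isT : 0 < 4)) muln0; apply: leq_trans Hmk.
have Hk : 2 ^ k <= m by apply: trunc_logP => //; apply: leq_trans m2.
Local Open Scope R_scope.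
have HSR : Rle (INR S) (4 * INR M * (INR k + 2)).
  move/leP: HSn => /le_INR. rewrite !mult_INR. rewrite !S_INR. simpl INR. lra.
have HMR : Rlt 0 (INR M) by apply: lt_0_INR; apply/ltP.
have Hm2 : Rle 2 (INR m) by move/leP: m2 => /le_INR.
have Hl2 := ln_lt_2.
have Hlm : Rle (ln 2) (ln (INR m)).
  case: (Rle_lt_or_eq_dec _ _ Hm2) => [h|<-]; last by apply: Rle_refl.
  by apply: Rlt_le; apply: ln_increasing => //; lra.
have Hkl : Rle (INR k * ln 2) (ln (INR m)).
  rewrite -ln_pow; last lra.
  have H2k : Rlt 0 (2 ^ k) by apply: pow_lt; lra.
  have E : forall j, INR (expn 2 j) = 2 ^ j.
    by elim=> [|j IH] //=; rewrite expnS mult_INR IH.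
  move/leP: Hk => /le_INR; rewrite E => Hk'.
  case: (Rle_lt_or_eq_dec _ _ Hk') => [h|<-]; last by apply: Rle_refl.
  by apply: Rlt_le; apply: ln_increasing.
have Hk0 : Rle 0 (INR k) by apply: pos_INR.
apply: Rle_trans (_ : Rle (4 * (INR k + 2)) _); last by nra.
unfold Rdiv.
apply: Rle_trans (_ : Rle ((4 * INR M * (INR k + 2)) * / INR M) _).
  apply: Rmult_le_compat_r => //; apply: Rlt_le; apply: Rinv_0_lt_compat => //.
right; field; lra.
Qed.
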